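(* Let $G$ be a finite, simple, connected graph of order $n\ge 2$. Then $\dim_{wt}(G)=n$ if and only if every vertex of $G$ is a twin.
   Context: $d(x,y)$ is the shortest-path distance and $N(x)$ the set of neighbors of $x$. A set $W\subseteq V(G)$ is a resolving set if for every two distinct vertices $y,z$ there is $x\in W$ with $d(y,x)\ne d(z,x)$. A set $W$ is a weak total resolving set (WTR-set) if $W$ is resolving and, for every $w\in W$ and every $x\in V(G)\setminus W$, there is $w'\in W\setminus\{w\}$ with $d(x,w')\ne d(w,w')$. $\dim_{wt}(G)$ is the minimum cardinality of a WTR-set. Two distinct vertices $u,v$ are twins if $N(u)\setminus\{v\}=N(v)\setminus\{u\}$; a vertex $u$ is a twin if there exists $v\ne u$ such that $u,v$ are twins. *)

(* Defs.v *)
From mathcomp Require Import all_boot.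
Set Implicit Arguments. Unset Strict Implicit. Unset Printing Implicit Defensive.

(* A simple graph on a finite vertex type T is given by an adjacency relation e,
   assumed symmetric and irreflexive in the theorem. *)
Section Graph.
Variables (T : finType) (e : rel T).

Fixpoint ball (k : nat) (x : T) : {set T} :=
  if k is k'.+1 then ball k' x :|: [set z | [exists y in ball k' x, e y z]]
  else [set x].

(* shortest-path distance: least k with y within k steps of x
   (well-defined for connected graphs, since k < #|T| suffices) *)
Definition dist (x y : T) : nat := find (fun k => y \in ball k x) (iota 0 #|T|).

Definition neighbors (x : T) : {set T} := [set y | e x y].

Definition resolving (W : {set T}) : bool :=
  [forall y, forall z, (y != z) ==> [exists x in W, dist y x != dist z x]].

Definition weak_total_resolving (W : {set T}) : bool :=
  resolving W &&
  [forall w in W, forall x in ~: W,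
     [exists w' in W :\ w, dist x w' != dist w w']].

(* the whole vertex set is always a WTR-set, so the minimum exists *)
Definition dim_wt : nat :=
  #| [arg min_(W < [set: T] | weak_total_resolving W) #|W|] |.

Definition twins (u v : T) : bool :=
  (u != v) && (neighbors u :\ v == neighbors v :\ u).

Definition is_twin (u : T) : bool := [exists v, twins u v].

End Graph.

(* Main.v *)
Require Import Defs.
From mathcomp Require Import all_boot.
Set Implicit Arguments. Unset Strict Implicit.

Section Aux.
Variables (T : finType) (e : rel T).
Hypothesis e_sym : symmetric e.
Hypothesis e_irr : irreflexive e.

Lemma ball_center k x : x \in ball e k x.
Proof. by elim: k => [|k IH] /=; rewrite ?in_set1 ?inE ?IH. Qed.

Lemma twins_sym u v : twins e u v -> twins e v u.
Proof. by case/andP=> H /eqP H2; rewrite /twins eq_sym H H2 eqxx. Qed.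

Lemma twins_adj u v x : twins e u v -> x != v -> e u x -> e v x.
Proof.
case/andP=> _ /eqP H xv ux.
have : x \in neighbors e u :\ v by rewrite !inE xv ux.
by rewrite H !inE => /andP [].
Qed.

Lemma ball_twin k u v x : twins e u v -> x != u -> x != v ->
  x \in ball e k u -> x \in ball e k v.
Proof.
move=> tw; elim: k x => [|k IH] x xu xv /=.
  by rewrite in_set1 (negbTE xu).
rewrite !inE => /orP [/IH -> //|/existsP [y /andP [yb yx]]].
apply/orP; right; apply/existsP.
case: (eqVneq y u) => [Eyu|yu].
  by exists v; rewrite ball_center (twins_adj tw xv) // -Eyu.
case: (eqVneq y v) => [Eyv|yv].
  by exists v; rewrite ball_center -Eyv.
by exists y; rewrite yx IH.
Qed.

Lemma dist_twin u v x : twins e u v -> x != u -> x != v ->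
  dist e u x = dist e v x.
Proof.
move=> tw xu xv; rewrite /dist; apply: eq_find => k /=.
apply/idP/idP; first exact: ball_twin.
exact: (ball_twin (twins_sym tw)).
Qed.

Lemma dist0 x y : (dist e x y == 0) = (y == x).
Proof.
have n0 : 0 < #|T| by apply/card_gt0P; exists x.
by rewrite /dist -(prednK n0) /= in_set1; case: (y == x).
Qed.

Lemma dist1 x y : 2 <= #|T| -> x != y -> (dist e x y == 1) = e x y.
Proof.
move=> n2 xy; rewrite /dist.
have -> : #|T| = (#|T| - 2).+2 by rewrite -addn2 subnK.
have yx : (y == x) = false by rewrite eq_sym (negbTE xy).
rewrite /= !inE yx /=.
have -> : [exists y0 in [set x], e y0 y] = e x y.
  apply/existsP/idP => [[z /andP []]|exy]; first by rewrite inE => /eqP ->.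
  by exists x; rewrite inE eqxx exy.
by case: (e x y).
Qed.

End Aux.

Theorem theorem4 (T : finType) (e : rel T)
  (e_sym : symmetric e) (e_irr : irreflexive e)
  (e_conn : forall x y : T, connect e x y)
  (n_ge2 : 2 <= #|T|) :
  dim_wt e = #|T| <-> (forall v : T, is_twin e v).
Proof.
have PT : weak_total_resolving e [set: T].
  apply/andP; split.
    apply/forallP => y; apply/forallP => z; apply/implyP => yz.
    apply/existsP; exists y; rewrite inE /=.
    by apply: contra yz => /eqP H; move: (@dist0 _ e y y); rewrite eqxx H dist0 eq_sym.
  by apply/forall_inP => w _; apply/forall_inP => x; rewrite !inE.
rewrite /dim_wt; case: arg_minnP => // W0 PW0 minW.
split.
  move=> H v; case: (boolP (is_twin e v)) => // nt; exfalso.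
  suff PV : weak_total_resolving e [set~ v].
    have := minW _ PV; rewrite H cardsC1.
    have : 0 < #|T| by apply/card_gt0P; exists v.
    by case: #|T| => // n _; rewrite ltnn.
  apply/andP; split.
    apply/forallP => y; apply/forallP => z; apply/implyP => yz.
    apply/existsP.
    case: (eqVneq y v) => [Eyv|yv].
      exists z; rewrite !inE; apply/andP; split.
        by rewrite -Eyv eq_sym.
      by apply/negP => /eqP D; move: (@dist0 _ e z z); rewrite eqxx -D dist0 eq_sym (negbTE yz).
    exists y; rewrite !inE yv /=.
    by apply: contra yz => /eqP H1; move: (@dist0 _ e y y); rewrite eqxx H1 dist0 eq_sym.
  apply/forall_inP => w; rewrite !inE => wv; apply/forall_inP => x.
  rewrite !inE negbK => /eqP ->.
  have vw : v != w by rewrite eq_sym.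
  have : ~~ twins e v w by apply/negP => t; move/negP: nt; apply; apply/existsP; exists w.
  rewrite /twins vw /= => /eqP ne.
  have [z zin] : exists z, (z \in neighbors e v :\ w) != (z \in neighbors e w :\ v).
    case: (pickP (fun z => (z \in neighbors e v :\ w) != (z \in neighbors e w :\ v))) => [z zin|K]; first by exists z.
    by exfalso; apply: ne; apply/setP => z; move: (K z) => /= /negbFE/eqP.
  move: zin; rewrite !inE.
  have zvw : forall a, e a z -> z != a.
    by move=> a eaz; apply: contraTneq eaz => ->; rewrite e_irr.
  have key : forall a b, e a z -> ~~ e b z -> z != a -> z != b ->
      dist e a z != dist e b z.
    move=> a b az bz za zb; apply/eqP => D.
    have az' : a != z by rewrite eq_sym.
    have bz' : b != z by rewrite eq_sym.
    move: (@dist1 _ e _ _ n_ge2 az') (@dist1 _ e _ _ n_ge2 bz').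
    by rewrite D az (negbTE bz) => ->.
  case ev: (e v z); case ew: (e w z); rewrite /= ?andbF ?andbT.
  - by rewrite (zvw _ ev) (zvw _ ew).
  - move=> /negbTE; rewrite ?eqbF_neg ?negbK => zw; have zv := zvw _ ev.
    apply/existsP; exists z; rewrite !inE zw zv /=; apply: key; rewrite ?ev ?ew ?zw //.
  - move=> zv0; have zv : z != v by move: zv0; case: (z != v).
    have zw := zvw _ ew.
    apply/existsP; exists z; rewrite !inE zw zv /= eq_sym; apply: key; rewrite ?ev ?ew //.
  - by [].
move=> H.
have W0T : W0 = [set: T].
  apply/setP => x; rewrite inE; apply/negPn/negP => xW.
  case/existsP: (H x) => v tw.
  have xv : x != v by case/andP: tw.
  case/andP: PW0 => /forallP res /forall_inP tot.
  case vW: (v \in W0).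
    have := tot v vW => /forall_inP /(_ x); rewrite inE xW => /(_ isT).
    case/existsP => w' /andP []; rewrite !inE => /andP [w'v w'W].
    rewrite (dist_twin tw) ?negbK ?eqxx //.
    by apply: contraNneq xW => <-.
  have := res x => /forallP /(_ v); rewrite xv /= => /existsP [w' /andP [w'W]].
  rewrite (dist_twin tw) ?eqxx //.
    by apply: contraTneq w'W => ->.
  by apply: contraTneq w'W => ->; rewrite vW.
by rewrite W0T cardsT.
Qed.
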